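(* Let $\mathcal H$ be a separable complex Hilbert space, $A\in L(\mathcal H)^+$ and $T\in L(\mathcal H)$. If $T$ is an $A$-idempotent then $I-T$ is an $A$-idempotent; and if $T$ is an $A$-projection then $I-T$ is an $A$-projection.
   Context: $L(\mathcal H)^+$ denotes the positive (semidefinite) bounded operators. For $A\in L(\mathcal H)^+$, $\|x\|_A=\langle Ax,x\rangle^{1/2}$. $T\in L(\mathcal H)$ is an $A$-idempotent if $AT^2=AT$. $T$ is an $A$-projection if $\|y-Ty\|_A\le\|y-s\|_A$ for all $y\in\mathcal H$ and all $s\in\overline{R(T)}$ (i.e. $T$ is an $A$-projection into the closure of its range). *)

(* Defs.v *)
From HB Require Import structures.
From mathcomp Require Import all_boot all_order all_algebra.
From mathcomp Require Import complex.
From mathcomp Require Import reals.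
Set Implicit Arguments. Unset Strict Implicit. Unset Printing Implicit Defensive.
Import Order.TTheory GRing.Theory Num.Theory.
Local Open Scope ring_scope.
Local Open Scope complex_scope.

Section Hilbert.
Variables (R : realType) (V : lmodType R[i]) (ip : V -> V -> R[i]).

Definition is_inner_product : Prop :=
  [/\ forall (a : R[i]) (x y z : V), ip (a *: x + y) z = a * ip x z + ip y z,
      forall x y : V, ip y x = (ip x y)^*,
      forall x : V, 0 <= ip x x
    & forall x : V, ip x x = 0 -> x = 0].

Definition ipnorm (x : V) : R := Num.sqrt (complex.Re (ip x x)).

Definition cauchy_seq (u : nat -> V) : Prop :=
  forall e : R, 0 < e -> exists N, forall m n, (N <= m)%N -> (N <= n)%N ->
    ipnorm (u m - u n) < e.

Definition converges_to (u : nat -> V) (l : V) : Prop :=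
  forall e : R, 0 < e -> exists N, forall n, (N <= n)%N -> ipnorm (u n - l) < e.

Definition ip_complete : Prop :=
  forall u : nat -> V, cauchy_seq u -> exists l, converges_to u l.

Definition ip_separable : Prop :=
  exists d : nat -> V, forall (x : V) (e : R), 0 < e -> exists n, ipnorm (x - d n) < e.

Definition separable_hilbert : Prop :=
  [/\ is_inner_product, ip_complete & ip_separable].

Definition bounded_op (T : {linear V -> V}) : Prop :=
  exists M : R, forall x, ipnorm (T x) <= M * ipnorm x.

Definition positive_op (A : {linear V -> V}) : Prop :=
  bounded_op A /\ forall x, 0 <= ip (A x) x.

Definition Anorm (A : {linear V -> V}) (x : V) : R := Num.sqrt (complex.Re (ip (A x) x)).

Definition A_idempotent (A T : {linear V -> V}) : Prop :=
  forall x, A (T (T x)) = A (T x).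

Definition in_closure_range (T : {linear V -> V}) (s : V) : Prop :=
  forall e : R, 0 < e -> exists x, ipnorm (s - T x) < e.

Definition A_projection (A T : {linear V -> V}) : Prop :=
  forall y s, in_closure_range T s -> Anorm A (y - T y) <= Anorm A (y - s).

End Hilbert.

Section IminusT.
Variables (R : realType) (V : lmodType R[i]) (T : {linear V -> V}).
Definition IminusT_fun (x : V) : V := x - T x.
Fact IminusT_is_linear : linear IminusT_fun.
Proof. by move=> a x y; rewrite /IminusT_fun linearP scalerBr addrACA opprD. Qed.
HB.instance Definition _ := GRing.isLinear.Build R[i] V V _ IminusT_fun IminusT_is_linear.
Definition IminusT : {linear V -> V} := IminusT_fun.
End IminusT.

(* Main.v *)
Require Import Defs.
From HB Require Import structures.
From mathcomp Require Import all_boot all_order all_algebra.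
From mathcomp Require Import complex reals.
From mathcomp Require Import ring lra.
Import Order.TTheory GRing.Theory Num.Theory.
Set Implicit Arguments. Unset Strict Implicit.
Local Open Scope ring_scope.

Section Aux.
Local Open Scope complex_scope.
Variables (R : realType) (V : lmodType R[i]) (ip : V -> V -> R[i]).
Hypothesis Hip : is_inner_product ip.

Definition bb (x y : V) : R := complex.Re (ip x y).

Lemma ReD (a b : R[i]) : complex.Re (a + b) = complex.Re a + complex.Re b.
Proof. by case: a; case: b. Qed.
Lemma ReRM (r : R) (a : R[i]) : complex.Re (r%:C * a) = r * complex.Re a.
Proof. by case: a => x y /=; rewrite mul0r subr0. Qed.
Lemma ReJ (a : R[i]) : complex.Re (a^*) = complex.Re a.
Proof. by case: a. Qed.

Lemma ip0l z : ip 0 z = 0.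
Proof.
case: Hip => H1 _ _ _.
have := H1 1 0 0 z; rewrite scale1r addr0 mul1r.
by move/(congr1 (fun t => t - ip 0 z)); rewrite addrK subrr.
Qed.

Lemma ipZDl a x y z : ip (a *: x + y) z = a * ip x z + ip y z.
Proof. by case: Hip. Qed.

Lemma bDl x y z : bb (x + y) z = bb x z + bb y z.
Proof. by rewrite /bb -{1}(scale1r x) ipZDl mul1r ReD. Qed.
Lemma bZl (r : R) x z : bb (r%:C *: x) z = r * bb x z.
Proof. by rewrite /bb -[r%:C *: x]addr0 ipZDl ip0l addr0 ReRM. Qed.
Lemma bC x y : bb x y = bb y x.
Proof. by case: Hip => _ H2 _ _; rewrite /bb H2 ReJ. Qed.
Lemma bDr x y z : bb z (x + y) = bb z x + bb z y.
Proof. by rewrite bC bDl !(bC z). Qed.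
Lemma bZr (r : R) x z : bb z (r%:C *: x) = r * bb z x.
Proof. by rewrite bC bZl bC. Qed.
Lemma bNl x z : bb (- x) z = - bb x z.
Proof.
have := bZl (-1) x z; rewrite mulN1r => <-.
by rewrite rmorphN rmorph1 scaleN1r.
Qed.
Lemma bNr x z : bb z (- x) = - bb z x.
Proof. by rewrite bC bNl bC. Qed.
Lemma bge0 x : 0 <= bb x x.
Proof. by case: Hip => _ _ H3 _; have := H3 x; rewrite lecE => /andP[]. Qed.

Lemma bCS (r : R) a d : 2 * r * bb a d <= r ^+ 2 * bb a a + bb d d.
Proof.
have := bge0 (r%:C *: a - d).
rewrite bDl bDr bDr !bZl !bZr !bNl !bNr !opprK (bC d a).
move=> H; nra.
Qed.

End Aux.

Lemma ge0_eps (R : realType) (c : R) : (forall e, 0 < e -> - e <= c) -> 0 <= c.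
Proof.
move=> H; rewrite leNgt; apply/negP => Hc.
have := H (- c / 2) ltac:(lra); lra.
Qed.

Section Main.
Local Open Scope complex_scope.
Variables (R : realType) (V : lmodType R[i]) (ip : V -> V -> R[i]).
Hypothesis Hip : is_inner_product ip.
Variables (A T : {linear V -> V}).
Hypothesis HA : positive_op ip A.

Definition q x := bb ip (A x) x.

Lemma qge0 x : 0 <= q x.
Proof. by case: HA => _ H; have := H x; rewrite lecE => /andP[]. Qed.

Lemma qD u v : q (u + v) = q u + q v + bb ip (A u) v + bb ip (A v) u.
Proof. rewrite /q linearD /= !(bDl Hip) !(bDr Hip). lra. Qed.

Lemma qZ (r : R) v : q (r%:C *: v) = r ^+ 2 * q v.
Proof. rewrite /q linearZ /= (bZl Hip) (bZr Hip). rewrite /q; ring. Qed.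

Lemma Anorm_le x y : Anorm ip A x <= Anorm ip A y -> q x <= q y.
Proof. by rewrite /Anorm ler_sqrt //; exact: qge0. Qed.

Lemma ipnorm0 : ipnorm ip 0 = 0.
Proof. by rewrite /ipnorm (ip0l Hip) sqrtr0. Qed.


Lemma orth (HP : A_projection ip A T) y z :
  bb ip (A (y - T y)) (T z) + bb ip (A (T z)) (y - T y) = 0.
Proof.
set S := _ + _.
set Q := q (T z).
have H r : q (y - T y) <= q (y - T y + r%:C *: T z).
  have E : y - T (y - r%:C *: z) = y - T y + r%:C *: T z.
    by rewrite linearB linearZ /= opprB addrCA addrC.
  rewrite -E; apply: Anorm_le; apply: HP => e He.
  by exists (y - r%:C *: z); rewrite subrr ipnorm0.
have HQ : 0 <= Q by apply: qge0.
move: (H (- S / (Q + 1))).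
rewrite [X in _ <= X]qD //. rewrite qZ // (bZr Hip) linearZ /= (bZl Hip) -/S.
set t := - S / (Q + 1).
have Ht : t * (Q + 1) = - S by rewrite /t divfK //; lra.
rewrite -/Q => H2.
have H3 : 0 <= t ^+ 2 * Q + t * S by rewrite /S; lra.
have H4 : 0 <= (t ^+ 2 * Q + t * S) * (Q + 1) by apply: mulr_ge0 => //; lra.
have E1 : (t ^+ 2 * Q + t * S) * (Q + 1) = t * S.
  have -> : (t ^+ 2 * Q + t * S) * (Q + 1) = t * Q * (t * (Q + 1)) + t * S * (Q + 1) by ring.
  rewrite Ht; ring.
have E2 : t * S * (Q + 1) = - (S * S) by rewrite -mulrA (mulrC S) mulrA Ht; ring.
have H5 : 0 <= t * S * (Q + 1) by apply: mulr_ge0 => //; lra.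
nra.
Qed.

End Main.

Lemma zid (V : zmodType) (a b c d e : V) : a - e - c = a - b - (c - d) - (e - (b - d)).
Proof.
rewrite -!addrA; congr (_ + _).
rewrite !opprB !addrA.
rewrite (addrAC (-b + d) (-c) b) (addrAC (-b) d b) addNr add0r.
rewrite (addrAC d (-c) (-d)) subrr add0r addrC.
done.
Qed.

Theorem mainTheorem2 (R : realType) (V : lmodType R[i]) (ip : V -> V -> R[i])
  (HH : separable_hilbert ip)
  (A T : {linear V -> V}) (HA : positive_op ip A) (HT : bounded_op ip T) :
  (A_idempotent A T -> A_idempotent A (IminusT T)) /\
  (A_projection ip A T -> A_projection ip A (IminusT T)).
Proof.
have Hip : is_inner_product ip by case: HH.
split.
  move=> H x.
  change (A ((x - T x) - T (x - T x)) = A (x - T x)).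
  by rewrite !linearB /= H subrr addr0.
move=> HP y s Hs.
change (Anorm ip A (y - (y - T y)) <= Anorm ip A (y - s)).
rewrite opprB addrCA subrr addr0 /Anorm ler_sqrt; last exact: (qge0 HA).
change (q ip A (T y) <= q ip A (y - s)).
set z := y - s - T y.
have Ez : y - s = T y + z by rewrite /z addrCA subrr addr0.
rewrite Ez (qD Hip).
have Hz := qge0 HA z.
set C := fun d => bb ip (A (T y)) d + bb ip (A d) (T y).
suff : 0 <= C z by rewrite /C; lra.
have [[M HM] _] := HA.
apply: ge0_eps => e He.
set K := bb ip (A (T y)) (A (T y)) + bb ip (T y) (T y).
set L := 1 + M ^+ 2.
have HK : 0 <= K by rewrite /K; apply: addr_ge0; apply: (bge0 Hip).
have HL : 0 < L by rewrite /L; have := sqr_ge0 M; lra.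
set r := e / (K + 1).
have HK1 : 0 < K + 1 by lra.
have Hr : r * (K + 1) = e by rewrite /r divfK //; exact: lt0r_neq0.
have Hr0 : 0 < r by rewrite /r divr_gt0.
set eta := r * e / L.
have Heta : eta * L = r * e by rewrite /eta divfK //; exact: lt0r_neq0.
have Heta0 : 0 < eta by rewrite /eta divr_gt0 // mulr_gt0.
have [x Hx] := Hs (Num.sqrt eta) ltac:(by rewrite sqrtr_gt0).
pose dd := s - (x - T x).
have Hx' : ipnorm ip dd < Num.sqrt eta := Hx.
move: Hx'; rewrite /ipnorm ltr_sqrt // -/(bb ip dd dd) => Hd.
have Hd0 := bge0 Hip dd.
have Ez2 : z = (y - x) - T (y - x) + - dd.
  by rewrite /z /dd linearB /= (zid y x (T y) (T x) s).
have HCz : C z = - C dd.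
  have := orth Hip HA HP (y - x) y.
  rewrite /C Ez2; set w := y - x - T (y - x) => Ho.
  rewrite (linearD A) /= (bDl Hip) (bDr Hip) (linearN A) /= (bNl Hip) (bNr Hip).
  lra.
rewrite HCz.
have B1 := bCS Hip r (A (T y)) dd.
have B2 := bCS Hip r (T y) (A dd).
have B3 : bb ip (A dd) (A dd) <= M ^+ 2 * bb ip dd dd.
  have := HM dd; rewrite /ipnorm -/(bb ip (A dd) (A dd)) -/(bb ip dd dd) => Hle.
  have P1 := sqrtr_ge0 (bb ip (A dd) (A dd)).
  have P2 := sqrtr_ge0 (bb ip dd dd).
  rewrite -(sqr_sqrtr (bge0 Hip (A dd))) -(sqr_sqrtr Hd0).
  have : 0 <= M * Num.sqrt (bb ip dd dd) by lra.
  move=> P3; nra.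
have Hsum : 2 * r * C dd <= r ^+ 2 * K + L * bb ip dd dd.
  rewrite /C /K /L (bC Hip (A dd) (T y)); lra.
have S1 : r ^+ 2 * K <= r * e.
  rewrite -Hr; have : 0 <= r * r by nra. nra.
have S2 : L * bb ip dd dd <= r * e by rewrite -Heta; nra.
have : r * C dd <= r * e by nra.
rewrite ler_pM2l //; lra.
Qed.
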